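(* Let $\mathbf M$ be a model category with Postnikov presentation $(\mathsf X,\mathsf Z)$, let $\mathbf C$ be a category with all finite limits and colimits, and let $F:\mathbf C\rightleftarrows\mathbf M:G$ be an adjunction with $F$ left adjoint. Put $\mathsf W=F^{-1}(\mathsf{WE}_{\mathbf M})$ and $\mathsf C=F^{-1}(\mathsf{Cof}_{\mathbf M})$. If $\mathsf{Post}_{G(\mathsf Z)}\subset\mathsf W$ and every morphism $f$ of $\mathbf C$ factors (a) as $f=pi$ with $i\in\mathsf C$ and $p\in\mathsf{Post}_{G(\mathsf Z)}$, and (b) as $f=qj$ with $j\in\mathsf C\cap\mathsf W$ and $q\in\mathsf{Post}_{G(\mathsf X)}$, then $\mathsf W$, $\mathsf C$ and $\widehat{\mathsf{Post}_{G(\mathsf X)}}$ are the weak equivalences, cofibrations and fibrations of a model category structure on $\mathbf C$, with respect to which $F\dashv G$ is a Quillen pair.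
   Context: For a set $\mathsf S$ of morphisms in a category, an $\mathsf S$-Postnikov tower is a morphism $\lim_{\beta<\lambda}Y_\beta\to Y_0$ (whenever this limit exists), where $\lambda$ is an ordinal and $Y:\lambda^{op}\to$ (the category) is a functor such that for each $\beta$ with $\beta+1<\lambda$ the map $Y_{\beta+1}\to Y_\beta$ is a pullback of some $x_{\beta+1}:X_{\beta+1}\to X_\beta$ in $\mathsf S$ along some morphism $Y_\beta\to X_\beta$, and $Y_\gamma=\lim_{\beta<\gamma}Y_\beta$ for every limit ordinal $\gamma<\lambda$. $\mathsf{Post}_{\mathsf S}$ is the set of these; $\widehat{\mathsf S}$ is the set of retracts of elements of $\mathsf S$; $G(\mathsf S)=\{G(s):s\in\mathsf S\}$. A Postnikov presentation of $\mathbf M$ is a pair $(\mathsf X,\mathsf Z)$ with $\mathsf{Fib}_{\mathbf M}=\widehat{\mathsf{Post}_{\mathsf X}}$, $\mathsf{Fib}_{\mathbf M}\cap\mathsf{WE}_{\mathbf M}=\widehat{\mathsf{Post}_{\mathsf Z}}$, and such that every morphism of $\mathbf M$ factors as a cofibration followed by an element of $\mathsf{Post}_{\mathsf Z}$, and as an acyclic cofibration followed by an element of $\mathsf{Post}_{\mathsf X}$. A Quillen pair is an adjunction whose left adjoint preserves cofibrations and whose right adjoint preserves fibrations. *)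

(* Defs.v *)
Set Implicit Arguments.
Unset Strict Implicit.

Record Category := {
  Ob : Type;
  Hom : Ob -> Ob -> Type;
  idm : forall a, Hom a a;
  comp : forall a b c, Hom b c -> Hom a b -> Hom a c;
  comp_id_l : forall a b (f : Hom a b), comp (idm b) f = f;
  comp_id_r : forall a b (f : Hom a b), comp f (idm a) = f;
  comp_assoc : forall a b c d (f : Hom a b) (g : Hom b c) (h : Hom c d),
      comp h (comp g f) = comp (comp h g) f
}.

Arguments Hom {C} a b : rename.
Arguments idm {C} a : rename.
Arguments comp {C a b c} g f : rename.

Notation "g ∘ f" := (comp g f) (at level 40, left associativity).

Definition MorClass (C : Category) := forall a b : Ob C, Hom a b -> Prop.

Definition SubClass {C : Category} (S T : MorClass C) : Prop :=
  forall a b (f : Hom a b), S a b f -> T a b f.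

Definition ClassEq {C : Category} (S T : MorClass C) : Prop :=
  forall a b (f : Hom a b), S a b f <-> T a b f.

Definition ClassInter {C : Category} (S T : MorClass C) : MorClass C :=
  fun a b f => S a b f /\ T a b f.

Definition IsPullback {C : Category} {a b c P : Ob C}
  (f : Hom a c) (g : Hom b c) (p1 : Hom P a) (p2 : Hom P b) : Prop :=
  f ∘ p1 = g ∘ p2 /\
  forall Q (q1 : Hom Q a) (q2 : Hom Q b), f ∘ q1 = g ∘ q2 ->
    exists u : Hom Q P, (p1 ∘ u = q1 /\ p2 ∘ u = q2) /\
      forall u' : Hom Q P, p1 ∘ u' = q1 -> p2 ∘ u' = q2 -> u' = u.

Definition IsPushout {C : Category} {a b c P : Ob C}
  (f : Hom c a) (g : Hom c b) (i1 : Hom a P) (i2 : Hom b P) : Prop :=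
  i1 ∘ f = i2 ∘ g /\
  forall Q (q1 : Hom a Q) (q2 : Hom b Q), q1 ∘ f = q2 ∘ g ->
    exists u : Hom P Q, (u ∘ i1 = q1 /\ u ∘ i2 = q2) /\
      forall u' : Hom P Q, u' ∘ i1 = q1 -> u' ∘ i2 = q2 -> u' = u.

(* all finite limits  <=>  terminal object + pullbacks *)
Definition HasFiniteLimits (C : Category) : Prop :=
  (exists t : Ob C, forall a : Ob C,
      exists h : Hom a t, forall h' : Hom a t, h' = h) /\
  (forall (a b c : Ob C) (f : Hom a c) (g : Hom b c),
      exists P (p1 : Hom P a) (p2 : Hom P b), IsPullback f g p1 p2).

(* all finite colimits  <=>  initial object + pushouts *)
Definition HasFiniteColimits (C : Category) : Prop :=
  (exists i : Ob C, forall a : Ob C,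
      exists h : Hom i a, forall h' : Hom i a, h' = h) /\
  (forall (a b c : Ob C) (f : Hom c a) (g : Hom c b),
      exists P (i1 : Hom a P) (i2 : Hom b P), IsPushout f g i1 i2).

Definition IsRetract {C : Category} {a b c d : Ob C}
  (f : Hom a b) (g : Hom c d) : Prop :=
  exists (i1 : Hom a c) (r1 : Hom c a) (i2 : Hom b d) (r2 : Hom d b),
    r1 ∘ i1 = idm a /\ r2 ∘ i2 = idm b /\
    g ∘ i1 = i2 ∘ f /\ f ∘ r1 = r2 ∘ g.

Definition Hat {C : Category} (S : MorClass C) : MorClass C :=
  fun a b f => exists c d (g : Hom c d), S c d g /\ IsRetract f g.

Definition RetractClosed {C : Category} (S : MorClass C) : Prop :=
  forall a b c d (f : Hom a b) (g : Hom c d), S c d g -> IsRetract f g -> S a b f.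

Definition LLP {C : Category} {a b c d : Ob C} (i : Hom a b) (p : Hom c d) : Prop :=
  forall (u : Hom a c) (v : Hom b d), p ∘ u = v ∘ i ->
    exists h : Hom b c, h ∘ i = u /\ p ∘ h = v.

Record IsModelStructure (C : Category) (W Cof Fib : MorClass C) : Prop := {
  ms_finlim : HasFiniteLimits C;
  ms_fincolim : HasFiniteColimits C;
  ms_2of3 : forall (a b c : Ob C) (f : Hom a b) (g : Hom b c),
      (W _ _ f -> W _ _ g -> W _ _ (g ∘ f)) /\
      (W _ _ f -> W _ _ (g ∘ f) -> W _ _ g) /\
      (W _ _ g -> W _ _ (g ∘ f) -> W _ _ f);
  ms_retW : RetractClosed W;
  ms_retCof : RetractClosed Cof;
  ms_retFib : RetractClosed Fib;
  ms_lift1 : forall (a b c d : Ob C) (i : Hom a b) (p : Hom c d),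
      Cof _ _ i -> Fib _ _ p -> W _ _ p -> LLP i p;
  ms_lift2 : forall (a b c d : Ob C) (i : Hom a b) (p : Hom c d),
      Cof _ _ i -> W _ _ i -> Fib _ _ p -> LLP i p;
  ms_fact1 : forall (a b : Ob C) (f : Hom a b), exists c (i : Hom a c) (p : Hom c b),
      Cof _ _ i /\ Fib _ _ p /\ W _ _ p /\ f = p ∘ i;
  ms_fact2 : forall (a b : Ob C) (f : Hom a b), exists c (j : Hom a c) (q : Hom c b),
      Cof _ _ j /\ W _ _ j /\ Fib _ _ q /\ f = q ∘ j
}.

Record ModelCategory := {
  mc_cat : Category;
  WE : MorClass mc_cat;
  Cof : MorClass mc_cat;
  Fib : MorClass mc_cat;
  mc_model : IsModelStructure WE Cof Fib
}.

Arguments WE M {a b} f : rename.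
Arguments Cof M {a b} f : rename.
Arguments Fib M {a b} f : rename.

Record Functor (C D : Category) := {
  fobj : Ob C -> Ob D;
  fmap : forall a b : Ob C, Hom a b -> Hom (fobj a) (fobj b);
  fmap_id : forall a, fmap (idm a) = idm (fobj a);
  fmap_comp : forall a b c (f : Hom a b) (g : Hom b c),
      fmap (g ∘ f) = fmap g ∘ fmap f
}.

Arguments fobj {C D} F a : rename.
Arguments fmap {C D} F {a b} f : rename.

Record Adjunction {C D : Category} (F : Functor C D) (G : Functor D C) := {
  adj_unit : forall a : Ob C, Hom a (fobj G (fobj F a));
  adj_counit : forall m : Ob D, Hom (fobj F (fobj G m)) m;
  adj_unit_nat : forall a b (f : Hom a b),
      fmap G (fmap F f) ∘ adj_unit a = adj_unit b ∘ f;
  adj_counit_nat : forall m n (g : Hom m n),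
      g ∘ adj_counit m = adj_counit n ∘ fmap F (fmap G g);
  adj_tri1 : forall a, adj_counit (fobj F a) ∘ fmap F (adj_unit a) = idm (fobj F a);
  adj_tri2 : forall m, fmap G (adj_counit m) ∘ adj_unit (fobj G m) = idm (fobj G m)
}.

Definition FPre {C D : Category} (F : Functor C D) (S : MorClass D) : MorClass C :=
  fun a b f => S _ _ (fmap F f).

Definition FImage {C D : Category} (G : Functor C D) (S : MorClass C) : MorClass D :=
  fun c d f => exists a b (s : Hom a b), S a b s /\
    existT (fun x => { y : Ob D & Hom x y }) (fobj G a)
      (existT (fun y => Hom (fobj G a) y) (fobj G b) (fmap G s))
    = existT (fun x => { y : Ob D & Hom x y }) c
      (existT (fun y => Hom c y) d f).

(* An ordinal lambda > 0 is represented by a type I with a strict well-order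
   lt and least element i0. *)
Definition IsOrdinal {I : Type} (lt : I -> I -> Prop) (i0 : I) : Prop :=
  (forall i, ~ lt i i) /\
  (forall i j k, lt i j -> lt j k -> lt i k) /\
  (forall i j, lt i j \/ i = j \/ lt j i) /\
  well_founded lt /\
  (forall i, i = i0 \/ lt i0 i).

(* A functor Y : lambda^op -> C *)
Record Tower (C : Category) (I : Type) (lt : I -> I -> Prop) := {
  Yob : I -> Ob C;
  Ymap : forall i j, lt j i -> Hom (Yob i) (Yob j);
  Ymap_comp : forall i j k (h1 : lt j i) (h2 : lt k j) (h3 : lt k i),
      Ymap h2 ∘ Ymap h1 = Ymap h3
}.

Arguments Yob {C I lt} t i : rename.
Arguments Ymap {C I lt} t {i j} h : rename.

Definition IsCone {C : Category} {I : Type} {lt : I -> I -> Prop}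
  (Y : Tower C lt) (P : I -> Prop) (L : Ob C)
  (pi : forall i, P i -> Hom L (Yob Y i)) : Prop :=
  forall i j (hi : P i) (hj : P j) (h : lt j i), Ymap Y h ∘ pi i hi = pi j hj.

Arguments IsCone {C I lt} Y P L pi.

Definition IsLimitCone {C : Category} {I : Type} {lt : I -> I -> Prop}
  (Y : Tower C lt) (P : I -> Prop) (L : Ob C)
  (pi : forall i, P i -> Hom L (Yob Y i)) : Prop :=
  IsCone Y P L pi /\
  forall L' (pi' : forall i, P i -> Hom L' (Yob Y i)), IsCone Y P L' pi' ->
    exists u : Hom L' L, (forall i hi, pi i hi ∘ u = pi' i hi) /\
      forall u' : Hom L' L, (forall i hi, pi i hi ∘ u' = pi' i hi) -> u' = u.

Arguments IsLimitCone {C I lt} Y P L pi.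

(* Y is an S-Postnikov tower diagram:
   - successor steps Y_{b+1} -> Y_b are pullbacks of maps of S;
   - Y_g = lim_{b<g} Y_b at limit ordinals g < lambda. *)
Definition IsPostTower {C : Category} (S : MorClass C) {I : Type}
  {lt : I -> I -> Prop} (Y : Tower C lt) : Prop :=
  (forall b s (hs : lt b s), (forall d, ~ (lt b d /\ lt d s)) ->
     exists xa xb (x : Hom xa xb), S xa xb x /\
       exists (g : Hom (Yob Y b) xb) (k : Hom (Yob Y s) xa),
         IsPullback x g k (Ymap Y hs)) /\
  (forall g, (exists b, lt b g) -> (forall b, lt b g -> exists d, lt b d /\ lt d g) ->
     IsLimitCone Y (fun b => lt b g) (Yob Y g) (fun b (h : lt b g) => Ymap Y h)).

(* Post_S: the morphisms lim_{b<lambda} Y_b -> Y_0 (for any limit cone) *)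
Definition Post {C : Category} (S : MorClass C) : MorClass C :=
  fun a b f => exists (I : Type) (lt : I -> I -> Prop) (i0 : I) (Y : Tower C lt),
    IsOrdinal lt i0 /\ IsPostTower S Y /\
    exists pi : forall i, Hom a (Yob Y i),
      IsLimitCone Y (fun _ => True) a (fun i _ => pi i) /\
      exists e : Yob Y i0 = b, f = eq_rect (Yob Y i0) (fun o => Hom a o) (pi i0) b e.

Arguments Post {C} S a b f.
Arguments Hat {C} S a b f.
Arguments FPre {C D} F S a b f : rename.
Arguments FImage {C D} G S c d f : rename.
Arguments ClassInter {C} S T a b f.

Definition IsPostnikovPresentation (M : ModelCategory) (X Z : MorClass (mc_cat M)) : Prop :=
  ClassEq (@Fib M) (Hat (Post X)) /\
  ClassEq (ClassInter (@Fib M) (@WE M)) (Hat (Post Z)) /\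
  (forall (a b : Ob (mc_cat M)) (f : Hom a b), exists c (i : Hom a c) (p : Hom c b),
      Cof M i /\ Post Z _ _ p /\ f = p ∘ i) /\
  (forall (a b : Ob (mc_cat M)) (f : Hom a b), exists c (j : Hom a c) (q : Hom c b),
      Cof M j /\ WE M j /\ Post X _ _ q /\ f = q ∘ j).

Definition IsQuillenPair {C D : Category} (CofC FibC : MorClass C)
  (CofD FibD : MorClass D) (F : Functor C D) (G : Functor D C)
  (adj : Adjunction F G) : Prop :=
  (forall (a b : Ob C) (f : Hom a b), CofC a b f -> CofD _ _ (fmap F f)) /\
  (forall (m n : Ob D) (g : Hom m n), FibD m n g -> FibC _ _ (fmap G g)).

(* Main.v *)
Require Import Defs.
From Stdlib Require Import Classical ClassicalEpsilon FunctionalExtensionality ProofIrrelevance.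

Lemma retract_refl {C : Category} {a b : Ob C} (f : Hom a b) : IsRetract f f.
Proof. exists (idm a), (idm a), (idm b), (idm b).
  repeat split; rewrite ?comp_id_l, ?comp_id_r; reflexivity. Qed.

Lemma hat_incl {C : Category} (S : MorClass C) a b (f : Hom a b) : S a b f -> Hat S a b f.
Proof. intros H. exists a, b, f. split; [exact H | apply retract_refl]. Qed.

Lemma retract_trans {C : Category} {a b c d e k : Ob C} (f : Hom a b) (g : Hom c d) (h : Hom e k) :
  IsRetract f g -> IsRetract g h -> IsRetract f h.
Proof.
  intros (i1 & r1 & i2 & r2 & H1 & H2 & H3 & H4) (j1 & s1 & j2 & s2 & K1 & K2 & K3 & K4).
  exists (j1 ∘ i1), (r1 ∘ s1), (j2 ∘ i2), (r2 ∘ s2). repeat split.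
  - rewrite <- comp_assoc, (comp_assoc i1 j1 s1), K1, comp_id_l; exact H1.
  - rewrite <- comp_assoc, (comp_assoc i2 j2 s2), K2, comp_id_l; exact H2.
  - rewrite comp_assoc, K3, <- comp_assoc, H3, comp_assoc; reflexivity.
  - rewrite comp_assoc, H4, <- comp_assoc, K4, comp_assoc; reflexivity.
Qed.

Lemma hat_hat {C : Category} (S : MorClass C) : RetractClosed (Hat S).
Proof. intros a b c d f g (e & k & h & Hh & Hr) Hfg.
  exists e, k, h. split; [exact Hh | eapply retract_trans; eauto]. Qed.

Lemma retract_fmap {C D : Category} (F : Functor C D) {a b c d : Ob C} (f : Hom a b) (g : Hom c d) :
  IsRetract f g -> IsRetract (fmap F f) (fmap F g).
Proof.
  intros (i1 & r1 & i2 & r2 & H1 & H2 & H3 & H4).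
  exists (fmap F i1), (fmap F r1), (fmap F i2), (fmap F r2).
  rewrite <- !fmap_comp, H1, H2, H3, H4, !fmap_id. auto.
Qed.

Lemma llp_retract {C : Category} {A B a b c d : Ob C} (i : Hom A B) (f : Hom a b) (g : Hom c d) :
  LLP i g -> IsRetract f g -> LLP i f.
Proof.
  intros Hl (i1 & r1 & i2 & r2 & H1 & H2 & H3 & H4) u v Hsq.
  destruct (Hl (i1 ∘ u) (i2 ∘ v)) as (h & Hh1 & Hh2).
  { rewrite comp_assoc, H3, <- comp_assoc, Hsq, comp_assoc. reflexivity. }
  exists (r1 ∘ h). split.
  - rewrite <- comp_assoc, Hh1, comp_assoc, H1, comp_id_l. reflexivity.
  - rewrite comp_assoc, H4, <- comp_assoc, Hh2, comp_assoc, H2, comp_id_l. reflexivity.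
Qed.

Lemma llp_hat {C : Category} {A B : Ob C} (i : Hom A B) (S : MorClass C) :
  (forall a b f, S a b f -> LLP i f) -> forall a b f, Hat S a b f -> LLP i f.
Proof. intros H a b f (c & d & g & Hg & Hr). eapply llp_retract; eauto. Qed.

Section Adj.
Context {C D : Category} {F : Functor C D} {G : Functor D C} (adj : Adjunction F G).

Definition phi {Q : Ob C} {m : Ob D} (f : Hom (fobj F Q) m) : Hom Q (fobj G m) :=
  fmap G f ∘ adj_unit adj Q.
Definition psi {Q : Ob C} {m : Ob D} (g : Hom Q (fobj G m)) : Hom (fobj F Q) m :=
  adj_counit adj m ∘ fmap F g.

Lemma phi_psi Q m (g : Hom Q (fobj G m)) : phi (psi g) = g.
Proof. unfold phi, psi. rewrite fmap_comp, <- comp_assoc, adj_unit_nat, comp_assoc,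
  adj_tri2, comp_id_l. reflexivity. Qed.

Lemma psi_phi Q m (f : Hom (fobj F Q) m) : psi (phi f) = f.
Proof. unfold phi, psi. rewrite fmap_comp, comp_assoc, <- adj_counit_nat, <- comp_assoc,
  adj_tri1, comp_id_r. reflexivity. Qed.

Lemma phi_post Q m n (f : Hom (fobj F Q) m) (k : Hom m n) : phi (k ∘ f) = fmap G k ∘ phi f.
Proof. unfold phi. rewrite fmap_comp, comp_assoc. reflexivity. Qed.

Lemma phi_pre Q Q' m (f : Hom (fobj F Q) m) (h : Hom Q' Q) : phi (f ∘ fmap F h) = phi f ∘ h.
Proof. unfold phi. rewrite fmap_comp, <- comp_assoc, adj_unit_nat, comp_assoc. reflexivity. Qed.

Lemma psi_post Q m n (g : Hom Q (fobj G m)) (k : Hom m n) : psi (fmap G k ∘ g) = k ∘ psi g.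
Proof. unfold psi. rewrite fmap_comp, comp_assoc, <- adj_counit_nat, comp_assoc. reflexivity. Qed.

Lemma psi_pre Q Q' m (g : Hom Q (fobj G m)) (h : Hom Q' Q) : psi (g ∘ h) = psi g ∘ fmap F h.
Proof. unfold psi. rewrite fmap_comp, comp_assoc. reflexivity. Qed.

Lemma psi_inj Q m (g g' : Hom Q (fobj G m)) : psi g = psi g' -> g = g'.
Proof. intros H. rewrite <- (phi_psi _ _ g), <- (phi_psi _ _ g'), H. reflexivity. Qed.

Lemma llp_adj {A B : Ob C} {c d : Ob D} (i : Hom A B) (z : Hom c d) :
  LLP (fmap F i) z -> LLP i (fmap G z).
Proof.
  intros Hl u v Hsq.
  destruct (Hl (psi u) (psi v)) as (l & Hl1 & Hl2).
  { rewrite <- psi_post, Hsq, psi_pre. reflexivity. }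
  exists (phi l). split.
  - rewrite <- phi_pre, Hl1, phi_psi. reflexivity.
  - rewrite <- phi_post, Hl2, phi_psi. reflexivity.
Qed.

Lemma pullback_G {a b c P : Ob D} (f : Hom a c) (g : Hom b c) (p1 : Hom P a) (p2 : Hom P b) :
  IsPullback f g p1 p2 -> IsPullback (fmap G f) (fmap G g) (fmap G p1) (fmap G p2).
Proof.
  intros [Hc Hu]. split.
  - rewrite <- !fmap_comp, Hc. reflexivity.
  - intros Q q1 q2 Hq.
    destruct (Hu _ (psi q1) (psi q2)) as (u & (Hu1 & Hu2) & Huu).
    { rewrite <- !psi_post, Hq. reflexivity. }
    exists (phi u). split; [split|].
    + rewrite <- phi_post, Hu1, phi_psi. reflexivity.
    + rewrite <- phi_post, Hu2, phi_psi. reflexivity.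
    + intros u' H1 H2. rewrite <- (phi_psi _ _ u'). f_equal. apply Huu.
      * rewrite <- psi_post, H1. reflexivity.
      * rewrite <- psi_post, H2. reflexivity.
Qed.

Lemma Tmap_comp {I : Type} {lt : I -> I -> Prop} (Y : Tower D lt) i j k
  (h1 : lt j i) (h2 : lt k j) (h3 : lt k i) :
  fmap G (Ymap Y h2) ∘ fmap G (Ymap Y h1) = fmap G (Ymap Y h3).
Proof. rewrite <- fmap_comp, (Ymap_comp Y h1 h2 h3). reflexivity. Qed.

Definition Tmap {I : Type} {lt : I -> I -> Prop} (Y : Tower D lt) : Tower C lt :=
  {| Yob := fun i => fobj G (Yob Y i);
     Ymap := fun i j h => fmap G (Ymap Y h);
     Ymap_comp := Tmap_comp Y |}.

Lemma limit_G {I : Type} {lt : I -> I -> Prop} (Y : Tower D lt) (P : I -> Prop) L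
  (pi : forall i, P i -> Hom L (Yob Y i)) :
  IsLimitCone Y P L pi ->
  IsLimitCone (Tmap Y) P (fobj G L) (fun i hi => fmap G (pi i hi)).
Proof.
  intros [Hc Hu]. split.
  - intros i j hi hj h. simpl. rewrite <- fmap_comp, Hc. reflexivity.
  - intros L' pi' Hc'.
    destruct (Hu _ (fun i hi => psi (pi' i hi))) as (u & Hu1 & Huu).
    { intros i j hi hj h. rewrite <- psi_post. f_equal. apply (Hc' i j hi hj h). }
    exists (phi u). split.
    + intros i hi. change (fmap G (pi i hi) ∘ phi u = pi' i hi). rewrite <- phi_post, Hu1, phi_psi. reflexivity.
    + intros u' H. rewrite <- (phi_psi _ _ u'). f_equal. apply Huu.
      intros i hi. rewrite <- psi_post. f_equal. apply H.
Qed.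

End Adj.

Definition oget {T : Type} (o : option T) : o <> None -> T :=
  match o as o' return o' <> None -> T with
  | Some x => fun _ => x
  | None => fun p => False_rect _ (p eq_refl)
  end.

Lemma oget_eq {T : Type} (o : option T) (p : o <> None) x : o = Some x -> oget o p = x.
Proof. intros E. subst o. reflexivity. Qed.

Section Trans.
Context {C : Category} {I : Type} {lt : I -> I -> Prop} (Y : Tower C lt) (i0 : I)
  {A B a : Ob C} (i : Hom A B) (pi : forall k, Hom a (Yob Y k)) (u : Hom A a)
  (v : Hom B (Yob Y i0)) (Hwf : well_founded lt).

Definition Good (k : I) (prev : forall j, lt j k -> option (Hom B (Yob Y j)))
  (h : Hom B (Yob Y k)) : Prop :=
  h ∘ i = pi k ∘ u /\
  (forall e : i0 = k, h = eq_rect i0 (fun o => Hom B (Yob Y o)) v k e) /\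
  (forall j (hj : lt j k), prev j hj = Some (Ymap Y hj ∘ h)).

Definition step (k : I) (prev : forall j, lt j k -> option (Hom B (Yob Y j))) :
  option (Hom B (Yob Y k)) :=
  match excluded_middle_informative (exists h, Good k prev h) with
  | left E => Some (proj1_sig (constructive_indefinite_description _ E))
  | right _ => None
  end.

Lemma step_spec k prev : (exists h, Good k prev h) ->
  exists h, step k prev = Some h /\ Good k prev h.
Proof.
  intros E. unfold step. destruct (excluded_middle_informative _) as [E'|n]; [|contradiction].
  eexists; split; [reflexivity|]. exact (proj2_sig (constructive_indefinite_description _ E')).
Qed.

Definition Fam : forall k, option (Hom B (Yob Y k)) :=
  Fix Hwf (fun k => option (Hom B (Yob Y k))) step.

Lemma Fam_eq k : Fam k = step k (fun j _ => Fam j).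
Proof.
  unfold Fam. apply (@Fix_eq _ lt Hwf (fun k => option (Hom B (Yob Y k))) step). intros x f g H.
  assert (E : f = g).
  { apply functional_extensionality_dep; intro y; apply functional_extensionality_dep;
    intro p; apply H. }
  subst; reflexivity.
Qed.


Lemma Fam_inv (S : MorClass C)
  (HS : forall a b s, S a b s -> LLP i s)
  (Hirr : forall k, ~ lt k k) (Htr : forall x y z, lt x y -> lt y z -> lt x z)
  (Htri : forall x y, lt x y \/ x = y \/ lt y x) (Hleast : forall k, k = i0 \/ lt i0 k)
  (Hsucc : forall b s (hs : lt b s), (forall d, ~ (lt b d /\ lt d s)) ->
     exists xa xb (x : Hom xa xb), S xa xb x /\
       exists (g : Hom (Yob Y b) xb) (k : Hom (Yob Y s) xa),
         IsPullback x g k (Ymap Y hs))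
  (Hlim : forall g, (exists b, lt b g) -> (forall b, lt b g -> exists d, lt b d /\ lt d g) ->
     IsLimitCone Y (fun b => lt b g) (Yob Y g) (fun b (h : lt b g) => Ymap Y h))
  (Hcone : forall k j (h : lt j k), Ymap Y h ∘ pi k = pi j)
  (Hsq : pi i0 ∘ u = v ∘ i) :
  forall k, exists h, Fam k = Some h /\ Good k (fun j _ => Fam j) h.
Proof.
  intros k. induction k as [k IH] using (well_founded_ind Hwf).
  rewrite Fam_eq. apply step_spec.
  destruct (Hleast k) as [-> | Hlt].
  - exists v. split; [symmetry; exact Hsq|]. split.
    + intros e. rewrite (proof_irrelevance _ e eq_refl). reflexivity.
    + intros j hj. exfalso. destruct (Hleast j) as [-> | H]; [exact (Hirr _ hj)|].
      exact (Hirr _ (Htr _ _ _ hj H)).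
  - assert (Hne : forall e : i0 = k, False).
    { intros e. subst k. exact (Hirr _ Hlt). }
    destruct (classic (exists b, lt b k /\ forall d, ~ (lt b d /\ lt d k)))
      as [(b & Hbk & Hnone) | Hnot].
    + destruct (Hsucc b k Hbk Hnone) as (xa & xb & x & Hx & g & kk & Hpc & Hpu).
      destruct (IH b Hbk) as (hb & Fb & Hb1 & Hb2 & Hb3).
      assert (Hsq2 : x ∘ (kk ∘ (pi k ∘ u)) = g ∘ (pi b ∘ u)).
      { rewrite comp_assoc, Hpc, <- comp_assoc, (comp_assoc u (pi k) (Ymap Y Hbk)), (Hcone k b Hbk). reflexivity. }
      destruct (HS _ _ x Hx (kk ∘ (pi k ∘ u)) (g ∘ hb)) as (l & Hl1 & Hl2).
      { rewrite Hsq2, <- comp_assoc, Hb1. reflexivity. }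
      destruct (Hpu B l hb Hl2) as (h & (Hh1 & Hh2) & _).
      exists h. split; [|split].
      * destruct (Hpu A _ _ Hsq2) as (w & _ & Hw).
        rewrite (Hw (h ∘ i)), (Hw (pi k ∘ u)); try reflexivity.
        -- rewrite comp_assoc, (Hcone k b Hbk). reflexivity.
        -- rewrite comp_assoc, Hh1. exact Hl1.
        -- rewrite comp_assoc, Hh2. exact Hb1.
      * intros e. destruct (Hne e).
      * intros j hj. destruct (Htri j b) as [Hjb | [-> | Hbj]].
        -- rewrite (Hb3 j Hjb), <- Hh2, comp_assoc, (Ymap_comp Y Hbk Hjb hj). reflexivity.
        -- rewrite Fb, <- Hh2, (proof_irrelevance _ hj Hbk). reflexivity.
        -- destruct (Hnone j (conj Hbj hj)).
    + assert (Hlk : forall b, lt b k -> exists d, lt b d /\ lt d k).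
      { intros b Hb. apply NNPP. intros Hn. apply Hnot. exists b. split; [exact Hb|].
        intros d Hd. apply Hn. exists d. exact Hd. }
      destruct (Hlim k (ex_intro _ i0 Hlt) Hlk) as [_ Hlu].
      assert (NS : forall b, lt b k -> Fam b <> None).
      { intros b Hb. destruct (IH b Hb) as (h & E & _). rewrite E. discriminate. }
      pose (hb := fun b (Hb : lt b k) => oget (Fam b) (NS b Hb)).
      assert (Hhb : forall b (Hb : lt b k) h, Fam b = Some h -> hb b Hb = h).
      { intros b Hb h E. apply oget_eq. exact E. }
      destruct (Hlu B hb) as (h & Hh & _).
      { intros b b' Hb Hb' hh. destruct (IH b Hb) as (h1 & E1 & _ & _ & E3).
        rewrite (Hhb b Hb h1 E1). symmetry. apply Hhb. apply E3. }
      exists h. split; [|split].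
      * destruct (Hlu A (fun b _ => pi b ∘ u)) as (w & _ & Hw).
        { intros b b' Hb Hb' hh. rewrite comp_assoc, Hcone. reflexivity. }
        rewrite (Hw (h ∘ i)), (Hw (pi k ∘ u)); try reflexivity.
        -- intros b Hb. rewrite comp_assoc, Hcone. reflexivity.
        -- intros b Hb. rewrite comp_assoc, Hh. destruct (IH b Hb) as (h1 & E1 & G1 & _).
           rewrite (Hhb b Hb h1 E1). exact G1.
      * intros e. destruct (Hne e).
      * intros j hj. rewrite Hh. destruct (IH j hj) as (h1 & E1 & _).
        rewrite (Hhb j hj h1 E1). exact E1.
Qed.

End Trans.

Lemma llp_post {C : Category} (S : MorClass C) {A B : Ob C} (i : Hom A B) :
  (forall a b s, S a b s -> LLP i s) -> forall a b f, Post S a b f -> LLP i f.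
Proof.
  intros HS a b f (Ix & lt & i0 & Y & Hord & [Hsucc Hlim] & pi & [Hcone Hlimit] & e & Hf).
  destruct e. simpl in Hf. subst f.
  intros u v Hsq.
  destruct Hord as (Hirr & Htr & Htri & Hwf & Hleast).
  assert (Hc : forall k j (h : lt j k), Ymap Y h ∘ pi k = pi j).
  { intros k j h. exact (Hcone k j Logic.I Logic.I h). }
  pose proof (Fam_inv Y i0 i pi u v Hwf S HS Hirr Htr Htri Hleast Hsucc Hlim Hc Hsq) as Inv.
  assert (NS : forall k, Fam Y i0 i pi u v Hwf k <> None).
  { intros k. destruct (Inv k) as (h & E & _). rewrite E. discriminate. }
  pose (H := fun k (_ : True) => oget _ (NS k)).
  assert (HH : forall k t h, Fam Y i0 i pi u v Hwf k = Some h -> H k t = h).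
  { intros k t h E. apply oget_eq. exact E. }
  destruct (Hlimit B H) as (w & Hw & _).
  { intros k j t t' hh. destruct (Inv k) as (h1 & E1 & _ & _ & E3).
    rewrite (HH k t h1 E1). symmetry. apply HH. apply E3. }
  exists w. split.
  - destruct (Hlimit A (fun k _ => pi k ∘ u)) as (w' & _ & Hw').
    { intros k j t t' hh. simpl. rewrite comp_assoc, Hc. reflexivity. }
    rewrite (Hw' (w ∘ i)), (Hw' u); try reflexivity.
    + intros k t. destruct (Inv k) as (h1 & E1 & G1 & _).
      simpl. rewrite comp_assoc, (Hw k t), (HH k t h1 E1). exact G1.
  - destruct (Inv i0) as (h1 & E1 & _ & G2 & _).
    rewrite (Hw i0 Logic.I), (HH i0 Logic.I h1 E1), (G2 eq_refl). reflexivity.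
Qed.

Section Single.
Context {C : Category} {a b : Ob C} (f : Hom a b).

Definition lt2 (x y : bool) : Prop := x = false /\ y = true.
Definition yob2 (t : bool) : Ob C := if t then a else b.
Definition ymap2 (i j : bool) : lt2 j i -> Hom (yob2 i) (yob2 j).
Proof. destruct i, j; simpl; intros h.
  - exfalso. destruct h as [h _]. discriminate.
  - exact f.
  - exfalso. destruct h as [_ h]. discriminate.
  - exfalso. destruct h as [_ h]. discriminate.
Defined.
Lemma ymap2_comp i j k (h1 : lt2 j i) (h2 : lt2 k j) (h3 : lt2 k i) :
  ymap2 j k h2 ∘ ymap2 i j h1 = ymap2 i k h3.
Proof. exfalso. destruct h1 as [e1 _], h2 as [_ e2]. congruence. Qed.
Definition T2 : Tower C lt2 := {| Yob := yob2; Ymap := ymap2; Ymap_comp := ymap2_comp |}.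

Definition pi2 (t : bool) : Hom a (yob2 t) :=
  if t return Hom a (yob2 t) then idm a else f.

Lemma post_single (S : MorClass C) : S a b f -> Post S a b f.
Proof.
  intros Hs. exists bool, lt2, false, T2. split; [|split; [split|]].
  - split; [|split; [|split; [|split]]].
    + intros x [e1 e2]. congruence.
    + intros x y z [_ e1] [e2 _]. congruence.
    + intros x y. destruct x, y; unfold lt2; auto.
    + intros x. constructor. intros y [Hy Hx]. subst y. constructor.
      intros z [_ Hz]. discriminate.
    + intros x. destruct x; [right; split; reflexivity | left; reflexivity].
  - intros x s hs Hn. destruct hs as [e1 e2]. subst x s.
    exists a, b, f. split; [exact Hs|]. exists (idm b), (idm a). simpl.
    split.
    + rewrite comp_id_l, comp_id_r. reflexivity.
    + intros Q q1 q2 Hq. exists q1. rewrite comp_id_l in *. split; [split; [reflexivity| exact Hq]|].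
      intros u' H1 _. rewrite comp_id_l in H1. exact H1.
  - intros g (x & [e1 e2]) H2. subst. destruct (H2 false (conj eq_refl eq_refl)) as (d & [_ e1] & [e2 _]). congruence.
  - exists pi2. split; [split|].
    + intros x y hx hy h. destruct h as [e1 e2]. subst. simpl. apply comp_id_r.
    + intros L' pi' Hc. exists (pi' true Logic.I). split.
      * intros x hx. destruct x, hx; simpl.
        -- apply comp_id_l.
        -- exact (Hc true false Logic.I Logic.I (conj eq_refl eq_refl)).
      * intros u' H. specialize (H true Logic.I). simpl in H. rewrite comp_id_l in H. exact H.
    + exists eq_refl. reflexivity.
Qed.
End Single.

Lemma post_G {C D : Category} {F : Functor C D} {G : Functor D C} (adj : Adjunction F G)
  (S : MorClass D) a b (f : Hom a b) :
  Post S a b f -> Post (FImage G S) (fobj G a) (fobj G b) (fmap G f).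
Proof.
  intros (Ix & lt & i0 & Y & Hord & [Hsucc Hlim] & pi & Hl & e & Hf).
  destruct e. simpl in Hf. subst f.
  exists Ix, lt, i0, (Tmap (G:=G) Y). split; [exact Hord|]. split; [split|].
  - intros b s hs Hn. destruct (Hsucc b s hs Hn) as (xa & xb & x & Hx & g & k & Hpb).
    exists (fobj G xa), (fobj G xb), (fmap G x). split.
    + exists xa, xb, x. split; [exact Hx | reflexivity].
    + exists (fmap G g), (fmap G k). exact (pullback_G adj _ _ _ _ Hpb).
  - intros g H1 H2. exact (limit_G adj Y _ _ _ (Hlim g H1 H2)).
  - exists (fun k => fmap G (pi k)). split.
    + exact (limit_G adj Y _ _ _ Hl).
    + exists eq_refl. reflexivity.
Qed.

Lemma fimage_llp {C D : Category} (G : Functor C D) (S : MorClass C) {A B : Ob D} (i : Hom A B) :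
  (forall a b s, S a b s -> LLP i (fmap G s)) -> forall c d f, FImage G S c d f -> LLP i f.
Proof.
  intros H c d f (a & b & s & Hs & E).
  exact (eq_rect _ (fun t : {x : Ob D & {y : Ob D & Hom x y}} => LLP i (projT2 (projT2 t)))
           (H _ _ _ Hs : LLP i (projT2 (projT2 (existT (fun x : Ob D => {y : Ob D & Hom x y}) (fobj G a)
    (existT (fun y : Ob D => Hom (fobj G a) y) (fobj G b) (fmap G s)))))) _ E).
Qed.

Theorem mainTheorem18 (M : ModelCategory) (X Z : MorClass (mc_cat M))
  (C : Category) (F : Functor C (mc_cat M)) (G : Functor (mc_cat M) C)
  (adj : Adjunction F G) :
  @IsPostnikovPresentation M X Z ->
  HasFiniteLimits C -> HasFiniteColimits C ->
  SubClass (Post (FImage G Z)) (FPre F (@WE M)) ->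
  (forall (a b : Ob C) (f : Hom a b), exists c (i : Hom a c) (p : Hom c b),
      FPre F (@Cof M) _ _ i /\ Post (FImage G Z) _ _ p /\ f = p ∘ i) ->
  (forall (a b : Ob C) (f : Hom a b), exists c (j : Hom a c) (q : Hom c b),
      FPre F (@Cof M) _ _ j /\ FPre F (@WE M) _ _ j /\
      Post (FImage G X) _ _ q /\ f = q ∘ j) ->
  IsModelStructure (FPre F (@WE M)) (FPre F (@Cof M)) (Hat (Post (FImage G X))) /\
  IsQuillenPair (FPre F (@Cof M)) (Hat (Post (FImage G X))) (@Cof M) (@Fib M) adj.
Proof.
  intros [HFib [HFW _]] Hlim Hcolim HZW Hfa Hfb.
  pose proof (mc_model M) as HM.
  assert (ZAF : forall a b z, Z a b z -> Fib M z /\ WE M z).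
  { intros a b z Hz. apply (HFW a b z). apply hat_incl. apply post_single. exact Hz. }
  assert (XF : forall a b x, X a b x -> Fib M x).
  { intros a b x Hx. apply (HFib a b x). apply hat_incl. apply post_single. exact Hx. }
  assert (LZ : forall A B (i : Hom A B), FPre F (@Cof M) _ _ i ->
            forall a b p, Post (FImage G Z) a b p -> LLP i p).
  { intros A B i Hi. apply llp_post. apply fimage_llp. intros a b s Hs.
    apply (llp_adj adj). destruct (ZAF _ _ _ Hs) as [H1 H2].
    exact (ms_lift1 HM (i:=fmap F i) (p:=s) Hi H1 H2). }
  assert (LX : forall A B (i : Hom A B), FPre F (@Cof M) _ _ i -> FPre F (@WE M) _ _ i ->
            forall a b p, Hat (Post (FImage G X)) a b p -> LLP i p).
  { intros A B i Hi Hw. apply llp_hat. apply llp_post. apply fimage_llp. intros a b s Hs.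
    apply (llp_adj adj).
    exact (ms_lift2 HM (i:=fmap F i) (p:=s) Hi Hw (XF _ _ _ Hs)). }
  split.
  - constructor.
    + exact Hlim.
    + exact Hcolim.
    + intros a b c f g. unfold FPre. rewrite fmap_comp.
      exact (ms_2of3 HM (fmap F f) (fmap F g)).
    + intros a b c d f g Hg Hr. unfold FPre in *.
      exact (ms_retW HM Hg (retract_fmap F f g Hr)).
    + intros a b c d f g Hg Hr. unfold FPre in *.
      exact (ms_retCof HM Hg (retract_fmap F f g Hr)).
    + apply hat_hat.
    + intros a b c d i p Hi Hp Hw.
      destruct (Hfa c d p) as (e & j & q & Hj & Hq & Hpq).
      assert (Hjw : FPre F (@WE M) _ _ j).
      { destruct (ms_2of3 HM (fmap F j) (fmap F q)) as (_ & _ & H3).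
        apply H3; [exact (HZW _ _ q Hq)|]. rewrite <- fmap_comp, <- Hpq. exact Hw. }
      destruct (LX _ _ j Hj Hjw _ _ p Hp (idm c) q) as (h & Hh1 & Hh2).
      { rewrite comp_id_r. exact Hpq. }
      apply (llp_retract i p q (LZ _ _ i Hi _ _ q Hq)).
      exists j, h, (idm d), (idm d). repeat split.
      * exact Hh1.
      * apply comp_id_l.
      * rewrite comp_id_l. symmetry. exact Hpq.
      * rewrite comp_id_l. exact Hh2.
    + intros a b c d i p Hi Hw Hp. exact (LX _ _ i Hi Hw _ _ p Hp).
    + intros a b f. destruct (Hfa a b f) as (c & i & p & Hi & Hp & Hf).
      exists c, i, p. split; [exact Hi|]. split; [|split; [exact (HZW _ _ p Hp) | exact Hf]].
      destruct (Hfb c b p) as (e & j & q & Hj & Hjw & Hq & Hpq).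
      destruct (LZ _ _ j Hj _ _ p Hp (idm c) q) as (h & Hh1 & Hh2).
      { rewrite comp_id_r. exact Hpq. }
      exists e, b, q. split; [exact Hq|].
      exists j, h, (idm b), (idm b). repeat split.
      * exact Hh1.
      * apply comp_id_l.
      * rewrite comp_id_l. symmetry. exact Hpq.
      * rewrite comp_id_l. exact Hh2.
    + intros a b f. destruct (Hfb a b f) as (c & j & q & Hj & Hjw & Hq & Hf).
      exists c, j, q. repeat split; try assumption. apply hat_incl. exact Hq.
  - split.
    + intros a b f Hf. exact Hf.
    + intros m n g Hg. apply (HFib m n g) in Hg. destruct Hg as (c & d & p & Hp & Hr).
      exists (fobj G c), (fobj G d), (fmap G p). split.
      * exact (post_G adj _ _ _ _ Hp).
      * exact (retract_fmap G _ _ Hr).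
Qed.
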